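(* (a) Let $C$ and $D$ be cones in $\mathbb{R}^n$ and $x_1,x_2,x_3\in\mathbb{R}^n$ three distinct collinear points with $x_3\notin[x_1,x_2]$. Then the polyhedra $(x_1+C)\cap(x_3+D)$ and $(x_2+C)\cap(x_3+D)$ are homothetic. (b) Let $n\ge2$ and $z\in\mathbb{R}^n$ with $\dim\big(\Diamond_n\cap(z+\Diamond_n)\big)=n$. Then there exists $\epsilon>0$ such that for all $\lambda\in(1-\epsilon,1+\epsilon)$, $$\mathcal{N}\Big(\big(e_n+\mathbb{R}_+(\Diamond_n-e_n)\big)\cap\big(\lambda z-e_n+\mathbb{R}_+(\Diamond_n+e_n)\big)\Big)=\mathcal{N}\Big(\big(e_n+\mathbb{R}_+(\Diamond_n-e_n)\big)\cap\big(z-e_n+\mathbb{R}_+(\Diamond_n+e_n)\big)\Big).$$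
   Context: A cone is a finitely generated pointed polyhedral cone $\mathbb{R}_+x_1+\cdots+\mathbb{R}_+x_k\subset\mathbb{R}^n$ containing no nonzero linear subspace; $\mathbb{R}_+X$ denotes the set of nonnegative linear combinations of elements of $X$. $\Diamond_n=\operatorname{conv}(\pm e_1,\ldots,\pm e_n)\subset\mathbb{R}^n$. For an $n$-dimensional polytope $P\subset\mathbb{R}^n$, its normal fan $\mathcal{N}(P)$ is the fan whose maximal cones are $(\mathbb{R}_+(P-v))^{\circ}$ for $v$ ranging over the vertices of $P$, where $C^{\circ}=\{x:x\cdot y\ge0\text{ for all }y\in C\}$. *)

(* Defs.v *)
From HB Require Import structures.
From mathcomp Require Import all_boot all_order all_algebra.
From mathcomp Require Import reals.
Set Implicit Arguments. Unset Strict Implicit. Unset Printing Implicit Defensive.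
Import Order.TTheory GRing.Theory Num.Theory.
Local Open Scope ring_scope.

Section Defs.
Variable R : realType.
Variable n : nat.
Local Notation vec := 'rV[R]_n.

Definition vset := vec -> Prop.

Definition dotv (x y : vec) : R := \sum_(i < n) x 0 i * y 0 i.

(* standard basis vector e_(i+1) (0-based index i) *)
Definition evec (i : nat) : vec := \row_(j < n) (if (j : nat) == i then 1 else 0).

Definition conic_hull (X : vset) : vset := fun y =>
  exists (k : nat) (c : 'I_k -> R) (v : 'I_k -> vec),
    (forall i, X (v i)) /\ (forall i, 0 <= c i) /\ y = \sum_(i < k) c i *: v i.

Definition conv_hull (X : vset) : vset := fun y =>
  exists (k : nat) (c : 'I_k -> R) (v : 'I_k -> vec),
    (forall i, X (v i)) /\ (forall i, 0 <= c i) /\ \sum_(i < k) c i = 1 /\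
    y = \sum_(i < k) c i *: v i.

Definition is_cone (C : vset) : Prop :=
  (exists xs : seq vec, C = conic_hull (fun x => x \in xs)) /\
  (forall L : {vspace vec}, (forall v, v \in L -> C v) -> L = 0%VS).

Definition translate (x : vec) (S : vset) : vset := fun y => exists s, S s /\ y = x + s.

Definition inter (S T : vset) : vset := fun y => S y /\ T y.

Definition homothetic (P Q : vset) : Prop :=
  exists (l : R) (t : vec), 0 < l /\ Q = (fun y => exists x, P x /\ y = l *: x + t).

Definition segment (x1 x2 : vec) : vset := fun y =>
  exists t : R, 0 <= t <= 1 /\ y = (1 - t) *: x1 + t *: x2.

Definition collinear (x1 x2 x3 : vec) : Prop :=
  exists (p d : vec) (s1 s2 s3 : R),
    x1 = p + s1 *: d /\ x2 = p + s2 *: d /\ x3 = p + s3 *: d.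

Definition diamond : vset :=
  conv_hull (fun x => exists i, (i < n)%N /\ (x = evec i \/ x = - evec i)).

Definition aff_indep_pts (k : nat) (S : vset) : Prop :=
  exists (x0 : vec) (X : 'M[R]_(k, n)),
    S x0 /\ (forall i, S (x0 + row i X)) /\ row_free X.

Definition dim_eq (S : vset) (d : nat) : Prop :=
  aff_indep_pts d S /\ ~ aff_indep_pts d.+1 S.

Definition polar (C : vset) : vset := fun x => forall y, C y -> 0 <= dotv x y.

Definition is_vertex (P : vset) (v : vec) : Prop :=
  P v /\ forall (x y : vec) (t : R), P x -> P y -> 0 < t < 1 ->
    v = (1 - t) *: x + t *: y -> x = y.

(* normal fan, represented by its set of maximal cones (R_+(P - v))^o, v a vertex *)
Definition normal_fan (P : vset) : vset -> Prop := fun K =>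
  exists v, is_vertex P v /\ K = polar (conic_hull (fun y => exists p, P p /\ y = p - v)).

End Defs.
Arguments diamond R n : clear implicits.
Arguments evec R n i : clear implicits.

(* Main.v *)
Require Import Defs.
From HB Require Import structures.
From mathcomp Require Import all_boot all_order all_algebra.
From mathcomp Require Import reals.
From mathcomp Require Import boolp.
From mathcomp Require Import ring lra.
Import Order.TTheory GRing.Theory Num.Theory.
Local Open Scope ring_scope.
Set Implicit Arguments. Unset Strict Implicit. Unset Printing Implicit Defensive.

Section Conic.
Variable R : realType.
Variable n : nat.
Local Notation vec := 'rV[R]_n.

Lemma conic_closed (X Y : vset R n) :
  Y 0 -> (forall a b, Y a -> Y b -> Y (a + b)) ->
  (forall c a, 0 <= c -> Y a -> Y (c *: a)) ->
  (forall y, X y -> Y y) -> forall y, conic_hull X y -> Y y.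
Proof.
move=> Y0 YD YZ XY y [k [c [v [Xv [c0 ->]]]]].
elim: k c v Xv c0 => [|k IH] c v Xv c0; first by rewrite big_ord0.
rewrite big_ord_recr /=; apply: YD; last by apply: YZ => //; apply: XY.
exact: (IH (fun i => c (widen_ord (leqnSn k) i)) (fun i => v (widen_ord (leqnSn k) i))).
Qed.

Lemma conic0 (X : vset R n) : conic_hull X 0.
Proof.
exists 0%N, (fun _ => 0), (fun _ => 0); split; first by case.
by split; [case | rewrite big_ord0].
Qed.

Lemma conic_gen (X : vset R n) y : X y -> conic_hull X y.
Proof.
move=> Xy; exists 1%N, (fun _ => 1), (fun _ => y); split=> // ; split=> //.
by rewrite big_ord1 scale1r.
Qed.

Lemma conicZ (X : vset R n) c y : 0 <= c -> conic_hull X y -> conic_hull X (c *: y).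
Proof.
move=> c0 [k [a [v [Xv [a0 ->]]]]]; exists k, (fun i => c * a i), v; split=> //; split.
  by move=> i; apply: mulr_ge0.
by rewrite scaler_sumr; apply: eq_bigr => i _; rewrite scalerA.
Qed.

Lemma conicD (X : vset R n) y1 y2 : conic_hull X y1 -> conic_hull X y2 -> conic_hull X (y1 + y2).
Proof.
move=> [k1 [a1 [v1 [X1 [a10 ->]]]]] [k2 [a2 [v2 [X2 [a20 ->]]]]].
exists (k1 + k2)%N, (fun i => match split i with inl j => a1 j | inr j => a2 j end),
  (fun i => match split i with inl j => v1 j | inr j => v2 j end).
split; first by move=> i; case: split.
split; first by move=> i; case: split.
rewrite big_split_ord /=; congr (_ + _); apply: eq_bigr => i _.
  by rewrite (unsplitK (inl i)).
by rewrite (unsplitK (inr i)).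
Qed.

Lemma conic_sub (X Y : vset R n) : (forall y, X y -> conic_hull Y y) ->
  forall y, conic_hull X y -> conic_hull Y y.
Proof.
move=> XY; apply: conic_closed => //; [exact: conic0|exact: conicD|exact: conicZ].
Qed.

End Conic.

Section Vert.
Variable R : realType.
Variable n : nat.
Local Notation vec := 'rV[R]_n.

Definition cvx (S : vset R n) := forall x y t, S x -> S y -> 0 <= t <= 1 -> S ((1 - t) *: x + t *: y).
Definition tcone (S : vset R n) (v : vec) := conic_hull (fun y => exists p, S p /\ y = p - v).
Definition lineless (T : vset R n) := forall d, T d -> T (- d) -> d = 0.

Lemma tcone_cvx S v y : cvx S -> S v -> tcone S v y ->
  exists s x, 0 <= s /\ S x /\ y = s *: (x - v).
Proof.
move=> cS Sv; apply: (conic_closed (Y := fun y => exists s x, 0 <= s /\ S x /\ y = s *: (x - v))).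
- by exists 0, v; split=> //; split=> //; rewrite scale0r.
- move=> a b [s1 [x1 [s10 [S1 ->]]]] [s2 [x2 [s20 [S2 ->]]]].
  have [s0|sn0] := eqVneq (s1 + s2) 0.
    have e1 : s1 = 0 by lra.
    have e2 : s2 = 0 by lra.
    by exists 0, v; split=> //; split=> //; rewrite e1 e2 !scale0r addr0.
  have sp : 0 < s1 + s2 by rewrite lt_def sn0 addr_ge0.
  exists (s1 + s2), ((1 - s2 / (s1 + s2)) *: x1 + (s2 / (s1 + s2)) *: x2).
  split; first exact: addr_ge0.
  split; first apply: cS => //.
    apply/andP; split; first by apply: divr_ge0 => //; exact: ltW.
    rewrite ler_pdivrMr // mul1r; lra.
  apply/rowP => i; rewrite !mxE; field; exact: sn0.
- move=> c a c0 [s [x [s0 [Sx ->]]]]; exists (c * s), x; split; first exact: mulr_ge0.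
  by split=> //; rewrite scalerA.
- move=> _ [p [Sp ->]]; exists 1, p; split=> //; split=> //; by rewrite scale1r.
Qed.

Lemma vertex_iff S v : cvx S -> (is_vertex S v <-> S v /\ lineless (tcone S v)).
Proof.
move=> cS; split.
  move=> [Sv Hv]; split=> // d Td Tnd.
  have [s [x [s0 [Sx ed]]]] := tcone_cvx cS Sv Td.
  have [r [y [r0 [Sy end_]]]] := tcone_cvx cS Sv Tnd.
  have [//|dn0] := eqVneq d 0.
  exfalso; move/eqP: dn0 => dn0.
  have sp : 0 < s.
    rewrite lt_def s0 andbT; apply/eqP => s00; apply: dn0; by rewrite ed s00 scale0r.
  have rp : 0 < r.
    rewrite lt_def r0 andbT; apply/eqP => r00; apply: dn0.
    by apply: oppr_inj; rewrite end_ r00 scale0r oppr0.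
  have srp : 0 < s + r by lra.
  have e : v = (1 - r / (s + r)) *: x + (r / (s + r)) *: y.
    apply/rowP => i; have := congr1 (fun w : vec => w 0 i) end_.
    rewrite ed !mxE => h.
    have hv : v 0 i = (s * x 0 i + r * y 0 i) / (s + r).
      rewrite -[LHS](mulfK (lt0r_neq0 srp)); congr (_ / _); nra.
    rewrite hv; field; exact: lt0r_neq0.
  have xy := Hv x y (r / (s + r)) Sx Sy.
  have : x = y.
    apply: xy => //; apply/andP; split; first by apply: divr_gt0.
    by rewrite ltr_pdivrMr // mul1r ltrDr.
  move=> exy; subst y.
  apply: dn0; apply/rowP => i; have := congr1 (fun w : vec => w 0 i) end_.
  rewrite ed !mxE => h.
  have : (s + r) * (x 0 i - v 0 i) = 0 by lra.
  move/eqP; rewrite mulf_eq0 => /orP[/eqP|/eqP h2]; first lra.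
  by rewrite h2 mulr0.
move=> [Sv Hl]; split=> // x y t Sx Sy /andP[t0 t1] ev.
have : x - y = 0.
  apply: Hl.
    have -> : x - y = t^-1 *: (x - v).
      apply/rowP => i; rewrite ev !mxE; field; lra.
    apply: conicZ; first by rewrite invr_ge0 ltW.
    by apply: conic_gen; exists x.
  have -> : - (x - y) = (1 - t)^-1 *: (y - v).
    apply/rowP => i; rewrite ev !mxE; field; lra.
  apply: conicZ; first by rewrite invr_ge0; lra.
  by apply: conic_gen; exists y.
by move/eqP; rewrite subr_eq0 => /eqP.
Qed.

End Vert.

Section Mink.
Variable R : realType.
Variable n : nat.
Local Notation vec := 'rV[R]_n.
Variables A B : vset R n.
Hypothesis cA : cvx A.
Hypothesis cB : cvx B.

Definition msum (t : vec) (al be : R) : vset R n :=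
  fun x => exists a b, A a /\ B b /\ x = t + al *: a + be *: b.

Lemma msum_cvx t al be : cvx (msum t al be).
Proof.
move=> x y s [a1 [b1 [A1 [B1 ->]]]] [a2 [b2 [A2 [B2 ->]]]] s01.
exists ((1 - s) *: a1 + s *: a2), ((1 - s) *: b1 + s *: b2).
split; first exact: cA.
split; first exact: cB.
apply/rowP => i; rewrite !mxE; ring.
Qed.

Lemma tcone_sub (t : vec) (al be : R) (t' : vec) (al' be' : R) (a b : vec) :
  0 < al -> 0 < be -> 0 < al' -> 0 < be' -> A a -> B b ->
  forall y, tcone (msum t al be) (t + al *: a + be *: b) y ->
            tcone (msum t' al' be') (t' + al' *: a + be' *: b) y.
Proof.
move=> alp bep alp' bep' Aa Bb; apply: conic_sub => _ [p [[a1 [b1 [A1 [B1 ->]]]] ->]].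
pose k := al / al' + be / be'.
have kp : 0 < k by rewrite /k addr_gt0 // divr_gt0.
pose mu := al / (al' * k).
pose nu := be / (be' * k).
have hmu : k * al' * mu = al.
  rewrite /mu; field; by rewrite !gt_eqF ?mulr_gt0.
have hnu : k * be' * nu = be.
  rewrite /nu; field; by rewrite !gt_eqF ?mulr_gt0.
have mu01 : 0 <= mu <= 1.
  apply/andP; split; first by rewrite /mu divr_ge0 // ltW // mulr_gt0.
  rewrite /mu ler_pdivrMr ?mulr_gt0 // mul1r.
  have -> : al' * k = al + al' * (be / be').
    rewrite /k; field; by rewrite !gt_eqF ?mulr_gt0.
  have : 0 <= al' * (be / be') by apply: mulr_ge0; [exact: ltW | apply: divr_ge0; exact: ltW].
  lra.
have nu01 : 0 <= nu <= 1.
  apply/andP; split; first by rewrite /nu divr_ge0 // ltW // mulr_gt0.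
  rewrite /nu ler_pdivrMr ?mulr_gt0 // mul1r.
  have -> : be' * k = be + be' * (al / al') by rewrite /k; field; by rewrite !gt_eqF ?mulr_gt0.
  have : 0 <= be' * (al / al') by apply: mulr_ge0; [exact: ltW | apply: divr_ge0; exact: ltW].
  lra.
have -> : t + al *: a1 + be *: b1 - (t + al *: a + be *: b) =
   k *: ((t' + al' *: ((1 - mu) *: a + mu *: a1) + be' *: ((1 - nu) *: b + nu *: b1))
          - (t' + al' *: a + be' *: b)).
  apply/rowP => i; rewrite !mxE.
  have e : k * (t' 0 i + al' * ((1 - mu) * a 0 i + mu * a1 0 i) +
     be' * ((1 - nu) * b 0 i + nu * b1 0 i) - (t' 0 i + al' * a 0 i + be' * b 0 i)) =
     (k * al' * mu) * (a1 0 i - a 0 i) + (k * be' * nu) * (b1 0 i - b 0 i) by ring.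
  rewrite e hmu hnu; ring.
apply: conicZ; first exact: ltW.
apply: conic_gen; eexists; split; last by reflexivity.
exists ((1 - mu) *: a + mu *: a1), ((1 - nu) *: b + nu *: b1).
split; first exact: cA.
by split; first exact: cB.
Qed.

Lemma fan_sub (t : vec) (al be : R) (t' : vec) (al' be' : R) K :
  0 < al -> 0 < be -> 0 < al' -> 0 < be' ->
  normal_fan (msum t al be) K -> normal_fan (msum t' al' be') K.
Proof.
move=> alp bep alp' bep' [v [Hv ->]].
have [Sv Hl] := (vertex_iff v (@msum_cvx t al be)).1 Hv.
have [a [b [Aa [Bb ev]]]] := Sv.
have Teq : tcone (msum t al be) v = tcone (msum t' al' be') (t' + al' *: a + be' *: b).
  rewrite ev; apply/funext => y; apply/propext; split; exact: tcone_sub.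
exists (t' + al' *: a + be' *: b); split.
  apply/(vertex_iff _ (@msum_cvx t' al' be')); split.
    by exists a, b.
  by rewrite -Teq.
by change (polar (tcone (msum t al be) v) = polar (tcone (msum t' al' be') (t' + al' *: a + be' *: b)));
  rewrite Teq.
Qed.

Lemma fan_eq (t : vec) (al be : R) (t' : vec) (al' be' : R) :
  0 < al -> 0 < be -> 0 < al' -> 0 < be' ->
  normal_fan (msum t al be) = normal_fan (msum t' al' be').
Proof.
move=> *; apply/funext => K; apply/propext; split; exact: fan_sub.
Qed.

End Mink.

Section PartA.
Variable R : realType.
Variable n : nat.
Local Notation vec := 'rV[R]_n.

Lemma cone_scale (C : vset R n) (l : R) (v : vec) : is_cone C -> 0 <= l -> C v -> C (l *: v).
Proof. by move=> [[xs ->] _] l0 Cv; apply: conicZ. Qed.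

Lemma eq_sub_vec (x y e : vec) : x = y + e -> e = x - y.
Proof. by move=> ->; rewrite addrC addKr. Qed.

Lemma partA (C D : vset R n) (x1 x2 x3 : vec) :
      is_cone C -> is_cone D ->
      x1 <> x2 -> x1 <> x3 -> x2 <> x3 ->
      collinear x1 x2 x3 -> ~ segment x1 x2 x3 ->
      homothetic (inter (translate x1 C) (translate x3 D))
                 (inter (translate x2 C) (translate x3 D)).
Proof.
move=> hC hD n12 n13 n23 [p [d [s1 [s2 [s3 [e1 [e2 e3]]]]]]] nseg.
have s12 : s1 - s2 != 0.
  apply/eqP => h; apply: n12; rewrite e1 e2; congr (_ + _ *: _); lra.
have s13 : s1 - s3 != 0.
  apply/eqP => h; apply: n13; rewrite e1 e3; congr (_ + _ *: _); lra.
have s23 : s2 - s3 != 0.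
  apply/eqP => h; apply: n23; rewrite e2 e3; congr (_ + _ *: _); lra.
have pr : 0 < (s1 - s3) * (s2 - s3).
  rewrite ltNge; apply/negP => hle; apply: nseg.
  exists ((s3 - s1) / (s2 - s1)); split.
    have hd : 0 < (s2 - s1) ^+ 2.
      by rewrite exprn_even_gt0 //= -oppr_eq0 opprB.
    apply/andP; split.
      have -> : (s3 - s1) / (s2 - s1) = ((s3 - s1) * (s2 - s1)) / ((s2 - s1) ^+ 2).
        field; by rewrite -oppr_eq0 opprB.
      by apply: divr_ge0; [nra | exact: ltW].
    have -> : (s3 - s1) / (s2 - s1) = 1 - ((s2 - s3) * (s2 - s1)) / ((s2 - s1) ^+ 2).
      field; by rewrite -oppr_eq0 opprB.
    rewrite lerBlDr lerDl; by apply: divr_ge0; [nra | exact: ltW].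
  rewrite e1 e2 e3; apply/rowP => i; rewrite !mxE; field; by rewrite -oppr_eq0 opprB.
pose l := (s2 - s3) / (s1 - s3).
have lp : 0 < l.
  have -> : l = ((s1 - s3) * (s2 - s3)) / ((s1 - s3) ^+ 2) by rewrite /l; field.
  by apply: divr_gt0 => //; rewrite exprn_even_gt0.
have ln0 : l != 0 by rewrite gt_eqF.
have hx : x2 - x3 = l *: (x1 - x3).
  rewrite e1 e2 e3 /l; apply/rowP => i; rewrite !mxE; field; exact: s13.
exists l, ((1 - l) *: x3); split=> //.
apply/funext => y; apply/propext; split.
  move=> [[c [Cc ey]] [e [De ey']]].
  have ee := eq_sub_vec ey'; subst y; subst e.
  exists (x3 + l^-1 *: (x2 + c - x3)); split.
    split; last by exists (l^-1 *: (x2 + c - x3)); split=> //; apply: cone_scale => //; rewrite invr_ge0 ltW.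
    exists (l^-1 *: c); split; first by apply: cone_scale => //; rewrite invr_ge0 ltW.
    have hx' : x2 = x3 + l *: (x1 - x3) by rewrite -hx addrC subrK.
    rewrite hx'; apply/rowP => i; rewrite !mxE; field; exact: ln0.
  apply/rowP => i; rewrite !mxE; field; exact: ln0.
move=> [x [[[c [Cc ex1]] [e [De ex3]]] ->]].
have hx' : x2 = x3 + l *: (x1 - x3) by rewrite -hx addrC subrK.
split.
  exists (l *: c); split; first by apply: cone_scale => //; rewrite ltW.
  rewrite hx' ex1; apply/rowP => i; rewrite !mxE; ring.
exists (l *: e); split; first by apply: cone_scale => //; rewrite ltW.
rewrite ex3; apply/rowP => i; rewrite !mxE; ring.
Qed.

End PartA.

Section Dia.
Variable R : realType.
Variable n : nat.
Local Notation vec := 'rV[R]_n.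

Definition nrm (y : vec) : R := \sum_i `|y 0 i|.

Lemma delta_sum (F : 'I_n -> R) (j : 'I_n) :
  \sum_i F i * (if (j : nat) == i then 1 else 0) = F j.
Proof.
rewrite (bigD1 j) //= eqxx mulr1 big1 ?addr0 // => i ij.
case: eqP => [h|]; last by rewrite mulr0.
by move: ij; rewrite (val_inj h) eqxx.
Qed.

Lemma nrm_evec (i : nat) : (i < n)%N -> nrm (evec R n i) = 1.
Proof.
move=> hi; rewrite /nrm.
under eq_bigr => j _ do rewrite mxE.
rewrite (bigD1 (Ordinal hi)) //= eqxx normr1 big1 ?addr0 // => j ji.
case: eqP => [h|]; last by rewrite normr0.
by move: ji; rewrite (_ : j = Ordinal hi) ?eqxx //; apply: val_inj.
Qed.

Lemma nrmN (y : vec) : nrm (- y) = nrm y.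
Proof. by apply: eq_bigr => i _; rewrite mxE normrN. Qed.

Lemma diamond_nrm (d : vec) : diamond R n d -> nrm d <= 1.
Proof.
move=> [k [c [v [Hv [c0 [c1 ->]]]]]].
rewrite /nrm.
under eq_bigr => j _ do rewrite summxE.
apply: (le_trans (ler_sum _ (fun j _ => ler_norm_sum _ _ _))).
rewrite exchange_big /= -c1 le_eqVlt; apply/orP; left; apply/eqP; apply: eq_bigr => i _.
have -> : \sum_j `|(c i *: v i) 0 j| = c i * nrm (v i).
  rewrite /nrm mulr_sumr; apply: eq_bigr => j _; by rewrite mxE normrM ger0_norm.
have [m [hm [->| ->]]] := Hv i; first by rewrite nrm_evec // mulr1.
by rewrite nrmN nrm_evec // mulr1.
Qed.

Lemma nrm_diamond (d : vec) : (0 < n)%N -> nrm d <= 1 -> diamond R n d.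
Proof.
move=> n0 hd.
pose r := (1 - nrm d) / (n + n)%:R.
have nR : 0 < n%:R :> R by rewrite ltr0n.
have r0 : 0 <= r by rewrite /r divr_ge0 ?subr_ge0 // ler0n.
exists (n + n)%N, (fun k => match split k with inl i => (d 0 i + `|d 0 i|) / 2 + r
                                        | inr i => (`|d 0 i| - d 0 i) / 2 + r end),
  (fun k => match split k with inl i => evec R n i | inr i => - evec R n i end).
split.
  move=> k; case: split => i; exists i; split=> //; by [left|right].
split.
  move=> k; case: split => i; apply: addr_ge0 => //; apply: divr_ge0 => //.
    by have := ler_norm (- d 0 i); rewrite normrN; lra.
  by have := ler_norm (d 0 i); lra.
split.
  rewrite big_split_ord /=.
  under eq_bigr => i _ do rewrite (unsplitK (inl i)).
  under [X in _ + X]eq_bigr => i _ do rewrite (unsplitK (inr i)).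
  rewrite -big_split /=.
  rewrite (eq_bigr (fun i : 'I_n => `|d 0 i| + (r + r))); last by move=> i _; field.
  rewrite big_split /= sumr_const card_ord -mulr_natr /r natrD.
  rewrite -/(nrm d); field; by rewrite gt_eqF // addr_gt0.
apply/rowP => j; rewrite summxE big_split_ord /=.
under eq_bigr => i _ do rewrite (unsplitK (inl i)) !mxE.
under [X in _ + X]eq_bigr => i _ do rewrite (unsplitK (inr i)) !mxE.
under [X in _ + X]eq_bigr => i _ do rewrite mulrN -mulNr.
by rewrite !delta_sum; field.
Qed.

End Dia.

Section Geo.
Variable R : realType.
Variable n : nat.
Variable N : 'I_n.
Hypothesis HN : (N : nat) = n.-1.
Local Notation vec := 'rV[R]_n.
Local Notation E := (evec R n n.-1).

Lemma neqN (i : 'I_n) : i != N -> ((i : nat) == n.-1) = false.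
Proof. by rewrite -HN; apply: negbTE. Qed.
Lemma eqN : ((N : nat) == n.-1) = true.
Proof. by rewrite HN eqxx. Qed.
Lemma n_gt0 : (0 < n)%N.
Proof. exact: (leq_ltn_trans (leq0n N) (ltn_ord N)). Qed.

Definition Lz (y : vec) : R := \sum_(i < n | i != N) `|y 0 i|.
Lemma nrm_split (y : vec) : nrm y = Lz y + `|y 0 N|.
Proof. by rewrite /nrm (bigD1 N) //= addrC. Qed.
Lemma Lz_ge0 (y : vec) : 0 <= Lz y.
Proof. by apply: sumr_ge0 => i _. Qed.

Lemma Kchar (s : R) (w : vec) : (s = 1 \/ s = -1) -> w = s *: E -> forall y : vec,
  conic_hull (translate w (diamond R n)) y <-> Lz y - s * y 0 N <= 0.
Proof.
move=> hs ew y.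
have s2 : s * s = 1 by case: hs => ->; rewrite ?mulr1 ?mulrNN ?mulr1.
have w0 : forall i, i != N -> w 0 i = 0 by move=> i iN; rewrite ew !mxE neqN // mulr0.
have wN : w 0 N = s by rewrite ew !mxE eqN mulr1.
split.
- apply: (conic_closed (Y := fun y : vec => Lz y - s * y 0 N <= 0)).
  + rewrite /Lz big1 => [|i _]; last by rewrite mxE normr0.
    by rewrite mxE mulr0 subr0.
  + move=> a b ha hb.
    have : Lz (a + b) <= Lz a + Lz b.
      rewrite /Lz -big_split; apply: ler_sum => i _; rewrite mxE; exact: ler_normD.
    rewrite mxE mulrDr; lra.
  + move=> c a c0 ha.
    have -> : Lz (c *: a) = c * Lz a.
      rewrite /Lz mulr_sumr; apply: eq_bigr => i _; by rewrite mxE normrM ger0_norm.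
    rewrite mxE; nra.
  + move=> _ [d [Dd ->]].
    have -> : Lz (w + d) = Lz d.
      rewrite /Lz; apply: eq_bigr => i iN; by rewrite mxE w0 // add0r.
    have := diamond_nrm Dd; rewrite nrm_split mxE wN => h.
    have := ler_norm (d 0 N); have := ler_norm (- d 0 N); rewrite normrN.
    case: hs => ->; lra.
- move=> hy.
  have Lz0 := Lz_ge0 y.
  have [t0|tn0] := eqVneq (s * y 0 N) 0.
    have yN : y 0 N = 0 by move: t0; case: hs => ->; lra.
    have Lzy : Lz y = 0 by lra.
    have yi := psumr_eq0P (fun i _ => normr_ge0 (y 0 i)) Lzy.
    have -> : y = 0.
      apply/rowP => i; rewrite mxE; have [->//|iN] := eqVneq i N.
      by apply/eqP; rewrite -normr_eq0; apply/eqP; apply: yi.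
    exact: conic0.
  have tp : 0 < s * y 0 N by rewrite lt_def tn0 /=; lra.
  set t := s * y 0 N in tn0 tp hy.
  have -> : y = t *: (w + (t^-1 *: y - w)).
    apply/rowP => i; rewrite !mxE; field; exact: tn0.
  apply: conicZ; first exact: ltW.
  apply: conic_gen; exists (t^-1 *: y - w); split=> //.
  apply: nrm_diamond; first exact: n_gt0.
  rewrite nrm_split.
  have -> : Lz (t^-1 *: y - w) = t^-1 * Lz y.
    rewrite /Lz mulr_sumr; apply: eq_bigr => i iN.
    by rewrite !mxE w0 // subr0 normrM gtr0_norm // invr_gt0.
  have -> : (t^-1 *: y - w) 0 N = 0.
    rewrite !mxE wN.
    have yN : y 0 N = s * t by rewrite /t mulrA s2 mul1r.
    rewrite yN; field; exact: tn0.
  rewrite normr0 addr0 mulrC ler_pdivrMr // mul1r; lra.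
Qed.


Lemma Lz_subE (x : vec) : Lz (x - E) = Lz x.
Proof. by apply: eq_bigr => i iN; rewrite !mxE neqN // subr0. Qed.
Lemma Lz_subE2 (x w : vec) : Lz (x - (w - E)) = Lz (x - w).
Proof. by apply: eq_bigr => i iN; rewrite !mxE neqN // subr0. Qed.

Definition Pset (w : vec) : vset R n :=
  inter (translate E (conic_hull (translate (- E) (diamond R n))))
        (translate (w - E) (conic_hull (translate E (diamond R n)))).

Lemma eq_sub_vec' (x y e : vec) : x = y + e -> e = x - y.
Proof. by move=> ->; rewrite addrC addKr. Qed.

Lemma Pset_iff (w x : vec) : Pset w x <->
  Lz x + x 0 N - 1 <= 0 /\ Lz (x - w) - (x 0 N - w 0 N + 1) <= 0.
Proof.
have K1 := Kchar (s := -1) (w := - E) (or_intror erefl) (esym (scaleN1r _)).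
have K2 := Kchar (s := 1) (w := E) (or_introl erefl) (esym (scale1r _)).
split.
  move=> [[s1 [Ks1 e1]] [s2 [Ks2 e2]]].
  move: Ks1 Ks2; rewrite (eq_sub_vec' e1) (eq_sub_vec' e2) K1 K2 Lz_subE Lz_subE2 !mxE eqN.
  lra.
move=> [h1 h2]; split.
  exists (x - E); split; last by rewrite addrC subrK.
  by rewrite K1 Lz_subE !mxE eqN; lra.
exists (x - (w - E)); split; last by rewrite addrC subrK.
by rewrite K2 Lz_subE2 !mxE eqN; lra.
Qed.

Definition tq (u q : R) : R :=
  if q == 0 then 0 else if u / q <= 0 then 0 else if 1 <= u / q then 1 else u / q.

Lemma tq_prop (u q : R) :
  [/\ 0 <= tq u q <= 1, `|u| = tq u q * `|q| + `|u - tq u q * q| &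
      `|u - q| = (1 - tq u q) * `|q| + `|u - tq u q * q|].
Proof.
rewrite /tq; have [->|q0] := eqVneq q 0.
  by rewrite !mul0r !subr0 normr0 !mulr0 !add0r lexx ler01.
have eu : u = (u / q) * q by rewrite divfK.
set r := u / q in eu *.
clearbody r.
have key : forall t, 0 <= t <= 1 -> `|r| = t + `|r - t| -> `|r - 1| = (1 - t) + `|r - t| ->
    [/\ 0 <= t <= 1, `|u| = t * `|q| + `|u - t * q| & `|u - q| = (1 - t) * `|q| + `|u - t * q|].
  move=> t tb h1 h2.
  have e1 : u - t * q = (r - t) * q by rewrite eu; ring.
  have e2 : u - q = (r - 1) * q by rewrite eu; ring.
  have e3 : `|u| = `|r| * `|q| by rewrite [in LHS]eu normrM.
  rewrite e1 e2 e3 !normrM -!mulrDl; split=> //; congr (_ * _); [exact: h1 | exact: h2].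
have [r0|r0] := lerP r 0.
  apply: key; first by rewrite lexx ler01.
    by rewrite subr0 add0r.
  by rewrite !subr0 (ler0_norm r0) ler0_norm; lra.
have [r1|r1] := lerP 1 r.
  apply: key; first by rewrite lexx ler01.
    by rewrite !ger0_norm; lra.
  by rewrite subrr add0r.
apply: key; first by apply/andP; split; apply: ltW.
  by rewrite subrr normr0 addr0 gtr0_norm.
by rewrite subrr normr0 addr0 ltr0_norm; lra.
Qed.

Lemma norm_cvx (u v s : R) : 0 <= s <= 1 ->
  `|(1 - s) * u + s * v| <= (1 - s) * `|u| + s * `|v|.
Proof.
move=> /andP[s0 s1]; apply: (le_trans (ler_normD _ _)).
have s1' : 0 <= 1 - s by lra.
by rewrite !normrM (ger0_norm s0) (ger0_norm s1').
Qed.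

Variable z : vec.

Definition Aset : vset R n := fun a => exists t : 'I_n -> R, (forall i, 0 <= t i <= 1) /\
  forall i, a 0 i = if i == N then - \sum_(j < n | j != N) t j * `|z 0 j| else t i * z 0 i.
Definition Bset : vset R n := fun b => Lz b + `|b 0 N + 1| <= 1.

Lemma Aset_cvx : cvx Aset.
Proof.
move=> a1 a2 s [t1 [t1b h1]] [t2 [t2b h2]] /andP[s0 s1].
exists (fun i => (1 - s) * t1 i + s * t2 i); split.
  move=> i; have /andP[? ?] := t1b i; have /andP[? ?] := t2b i.
  apply/andP; split; nra.
move=> i; rewrite !mxE h1 h2; case: (i == N); last by ring.
have -> : \sum_(j < n | j != N) ((1 - s) * t1 j + s * t2 j) * `|z 0 j| =
   (1 - s) * \sum_(j < n | j != N) t1 j * `|z 0 j| + s * \sum_(j < n | j != N) t2 j * `|z 0 j|.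
  by rewrite !mulr_sumr -big_split /=; apply: eq_bigr => j _; ring.
ring.
Qed.

Lemma Bset_cvx : cvx Bset.
Proof.
move=> b1 b2 s h1 h2 s01; have /andP[s0 s1] := s01.
rewrite /Bset.
have hL : Lz ((1 - s) *: b1 + s *: b2) <= (1 - s) * Lz b1 + s * Lz b2.
  rewrite /Lz !mulr_sumr -big_split; apply: ler_sum => i _; rewrite !mxE.
  exact: norm_cvx.
have hN : `|((1 - s) *: b1 + s *: b2) 0 N + 1| <= (1 - s) * `|b1 0 N + 1| + s * `|b2 0 N + 1|.
  rewrite !mxE (_ : _ + _ + 1 = (1 - s) * (b1 0 N + 1) + s * (b2 0 N + 1)); last by ring.
  exact: norm_cvx.
have := ler_wpM2l (x := 1 - s) _ h1; rewrite subr_ge0 => /(_ s1) ha.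
have := ler_wpM2l (x := s) s0 h2 => hb.
rewrite mulrDr mulr1 in ha; rewrite mulrDr mulr1 in hb.
lra.
Qed.


Lemma P_eq_S (lam rho : R) : 0 < lam -> rho = 1 - lam * (z 0 N + Lz z) / 2 -> 0 < rho ->
  Pset (lam *: z) = msum Aset Bset E lam rho.
Proof.
move=> lp hr rp; apply/funext => x; apply/propext; rewrite Pset_iff; split.
- move=> [h1 h2].
  pose t i := tq (x 0 i) (lam * z 0 i).
  pose T := \sum_(j < n | j != N) t j * `|z 0 j|.
  pose a : vec := \row_i (if i == N then - T else t i * z 0 i).
  pose b : vec := rho^-1 *: (x - E - lam *: a).
  have rn0 : rho != 0 by rewrite gt_eqF.
  exists a, b; split.
    exists t; split; first by move=> i; have [] := tq_prop (x 0 i) (lam * z 0 i).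
    by move=> i; rewrite mxE.
  split; last first.
    apply/rowP => i; rewrite /b !mxE; field; exact: rn0.
  rewrite /Bset.
  pose M := \sum_(i < n | i != N) `|x 0 i - t i * (lam * z 0 i)|.
  have hLx : Lz x = lam * T + M.
    rewrite /Lz /M /T /t mulr_sumr -big_split /=; apply: eq_bigr => i _.
    have [_ -> _] := tq_prop (x 0 i) (lam * z 0 i).
    rewrite normrM (gtr0_norm lp); ring.
  have hLxz : Lz (x - lam *: z) = lam * (Lz z - T) + M.
    rewrite /Lz /M /T /t mulrBr !mulr_sumr -sumrB -big_split /=; apply: eq_bigr => i _.
    rewrite !mxE.
    have [_ _ ->] := tq_prop (x 0 i) (lam * z 0 i).
    rewrite normrM (gtr0_norm lp); ring.
  have hLb : Lz b = rho^-1 * M.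
    rewrite /Lz /M mulr_sumr; apply: eq_bigr => i iN; rewrite /b !mxE neqN // (negbTE iN).
    rewrite normrM gtr0_norm ?invr_gt0 //; congr (_ * `|_|); ring.
  have hbN : b 0 N + 1 = rho^-1 * (x 0 N - 1 + lam * T + rho).
    rewrite /b !mxE eqN eqxx; field; exact: rn0.
  rewrite hLb hbN normrM gtr0_norm ?invr_gt0 // -mulrDr mulrC ler_pdivrMr // mul1r.
  rewrite hLx in h1; rewrite hLxz mxE in h2.
  have : `|x 0 N - 1 + lam * T + rho| <= rho - M by rewrite ler_norml; apply/andP; split; lra.
  lra.
- move=> [a [b [[t [tb ha]] [hb ->]]]].
  set T := \sum_(j < n | j != N) t j * `|z 0 j| in ha *.
  have xN : (E + lam *: a + rho *: b) 0 N = 1 - lam * T + rho * b 0 N.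
    by rewrite !mxE eqN ha eqxx; ring.
  have hLx : Lz (E + lam *: a + rho *: b) <= lam * T + rho * Lz b.
    rewrite /Lz /T !mulr_sumr -big_split /=; apply: ler_sum => i iN.
    rewrite !mxE neqN // ha (negbTE iN) add0r.
    apply: (le_trans (ler_normD _ _)); rewrite !normrM (gtr0_norm lp) (gtr0_norm rp).
    have /andP[t0 t1] := tb i.
    by rewrite (ger0_norm t0).
  have hLxz : Lz (E + lam *: a + rho *: b - lam *: z) <= lam * (Lz z - T) + rho * Lz b.
    rewrite /Lz /T mulrBr !mulr_sumr -sumrB -big_split /=; apply: ler_sum => i iN.
    rewrite !mxE neqN // ha (negbTE iN) add0r.
    have /andP[t0 t1] := tb i.
    rewrite (_ : lam * (t i * z 0 i) + rho * b 0 i - lam * z 0 i =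
                 rho * b 0 i + (lam * (1 - t i)) * (- z 0 i)); last by ring.
    apply: (le_trans (ler_normD _ _)).
    have l1 : 0 <= lam * (1 - t i) by apply: mulr_ge0; lra.
    rewrite [`|rho * _|]normrM [`|_ * - _|]normrM normrN (gtr0_norm rp) (ger0_norm l1); lra.
  have hbN := ler_norm (b 0 N + 1).
  have hbN' := ler_norm (- (b 0 N + 1)); rewrite normrN in hbN'.
  have Lb0 := Lz_ge0 b.
  rewrite /Bset in hb.
  have q1 : 0 <= rho * (- (Lz b + b 0 N)) by apply: mulr_ge0; lra.
  have q2 : 0 <= rho * (2 + b 0 N - Lz b) by apply: mulr_ge0; lra.
  rewrite xN [(lam *: z) 0 N]mxE; split; lra.
Qed.

End Geo.

Section Dim.
Variable R : realType.
Variable n : nat.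
Variable N : 'I_n.
Variable z : 'rV[R]_n.
Local Notation vec := 'rV[R]_n.

Lemma dim_bound : dim_eq (inter (diamond R n) (translate z (diamond R n))) n ->
  z 0 N + Lz N z < 2.
Proof.
move=> [[x0 [X [Sx0 [Srow rf]]]] _].
rewrite ltNge; apply/negP => hge.
pose s : vec := \row_i (if i == N then 1 else if 0 <= z 0 i then 1 else -1).
have sabs : forall i, `|s 0 i| = 1.
  move=> i; rewrite mxE; case: (i == N); first exact: normr1.
  by case: ifP => _; rewrite ?normrN normr1.
have dle : forall x : vec, dotv s x <= nrm x.
  move=> x; rewrite /dotv /nrm; apply: ler_sum => i _.
  by apply: (le_trans (ler_norm _)); rewrite normrM sabs mul1r.
have dD : forall x y : vec, dotv s (x + y) = dotv s x + dotv s y.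
  by move=> x y; rewrite /dotv -big_split; apply: eq_bigr => i _; rewrite !mxE mulrDr.
have dN : forall x : vec, dotv s (- x) = - dotv s x.
  by move=> x; rewrite /dotv -sumrN; apply: eq_bigr => i _; rewrite !mxE mulrN.
have dz : dotv s z = z 0 N + Lz N z.
  rewrite /dotv (bigD1 N) //= mxE eqxx mul1r; congr (_ + _); apply: eq_bigr => i iN.
  rewrite mxE (negbTE iN); case: ifP => h; first by rewrite mul1r ger0_norm.
  by rewrite mulN1r ltr0_norm // ltNge h.
have on1 : forall x, inter (diamond R n) (translate z (diamond R n)) x -> dotv s x = 1.
  move=> x [Dx [e [De ex]]]; subst x.
  have a1 := le_trans (dle _) (diamond_nrm Dx).
  have a2 : dotv s (- e) <= 1 by apply: (le_trans (dle _)); rewrite nrmN; exact: diamond_nrm.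
  rewrite dN in a2; rewrite dD dz in a1 *; lra.
have hrow : forall i, dotv s (row i X) = 0.
  by move=> i; have := on1 _ (Srow i); rewrite dD (on1 _ Sx0); lra.
have hXs : X *m s^T = 0.
  apply/matrixP => i j; rewrite (ord1 j) [RHS]mxE -(hrow i) /dotv mxE; apply: eq_bigr => k _.
  by rewrite !mxE mulrC.
have Xu : X \in unitmx by rewrite -row_free_unit.
have : s^T = 0 by rewrite -(mulKmx Xu (s^T)) hXs mulmx0.
by move/matrixP => /(_ N 0); rewrite !mxE eqxx => /eqP; rewrite oner_eq0.
Qed.

End Dim.

Theorem lemma6p4 (R : realType) (n : nat) :
  (forall (C D : vset R n) (x1 x2 x3 : 'rV[R]_n),
      is_cone C -> is_cone D ->
      x1 <> x2 -> x1 <> x3 -> x2 <> x3 ->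
      collinear x1 x2 x3 -> ~ segment x1 x2 x3 ->
      homothetic (inter (translate x1 C) (translate x3 D))
                 (inter (translate x2 C) (translate x3 D)))
  /\
  ((2 <= n)%N -> forall z : 'rV[R]_n,
      dim_eq (inter (diamond R n) (translate z (diamond R n))) n ->
      exists eps : R, 0 < eps /\
        forall lam : R, 1 - eps < lam < 1 + eps ->
          normal_fan
            (inter (translate (evec R n n.-1)
                      (conic_hull (translate (- evec R n n.-1) (diamond R n))))
                   (translate (lam *: z - evec R n n.-1)
                      (conic_hull (translate (evec R n n.-1) (diamond R n)))))
          = normal_fan
            (inter (translate (evec R n n.-1)
                      (conic_hull (translate (- evec R n n.-1) (diamond R n))))
                   (translate (z - evec R n n.-1)
                      (conic_hull (translate (evec R n n.-1) (diamond R n)))))).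
Proof.
split; first by move=> *; apply: partA.
move=> n2 z hdim.
have hN : (n.-1 < n)%N by rewrite ltn_predL; apply: leq_trans n2.
pose N := Ordinal hN.
have HN : (N : nat) = n.-1 by [].
have hm := @dim_bound R n N z hdim.
set m := z 0 N + Lz N z in hm.
have em : 0 < 2 + `|m| by have := normr_ge0 m; lra.
pose eps := (2 - m) / (2 + `|m|).
have ep : 0 < eps by rewrite /eps divr_gt0 //; lra.
exists eps; split=> // lam /andP[l1 l2].
have eps1 : eps <= 1.
  rewrite /eps ler_pdivrMr // mul1r; have := ler_norm (- m); rewrite normrN; lra.
have lp : 0 < lam by lra.
have lm : lam * m < 2.
  have [hm0|hm0] := lerP m 0; first nra.
  have : lam * m < (1 + eps) * m by rewrite ltr_pM2r.
  have -> : (1 + eps) * m = 4 * m / (2 + m).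
    rewrite /eps gtr0_norm //; field; rewrite gt_eqF //; lra.
  move=> h; apply: (lt_trans h); rewrite ltr_pdivrMr; lra.
have r1 : 0 < 1 - lam * (z 0 N + Lz N z) / 2 by rewrite -/m; lra.
have r2 : 0 < 1 - 1 * (z 0 N + Lz N z) / 2 by rewrite -/m; lra.
change (normal_fan (Pset (lam *: z)) = normal_fan (Pset z)).
rewrite -{2}(scale1r z).
rewrite (P_eq_S HN lp (erefl _) r1) (P_eq_S HN ltr01 (erefl _) r2).
by apply: (fan_eq (@Aset_cvx R n N z) (@Bset_cvx R n N)).
Qed.
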